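(* Let $p>1$ and $q>1$ be real numbers with $\frac1p+\frac1q=1$, and let $X,Y$ be nonnegative random variables on a common probability space with $\|X\|_p+\|Y\|_p+\|Y\|_q<\infty$. For nonnegative real numbers $A,B,C$ define $$\Delta_{p;A,B,C}(X,Y):=A+\mathbb{E}X^{p-1}Y-(\mathbb{E}X)^{p-1}\,\mathbb{E}Y-\big(B+\mathbb{E}X^p-(\mathbb{E}X)^p\big)^{1/q}\big(C+\mathbb{E}Y^p-(\mathbb{E}Y)^p\big)^{1/p},$$ and let $\Delta_p(X,Y):=\Delta_{p;0,0,0}(X,Y)$. If the nonnegative real numbers $A,B,C$ satisfy $A\le B^{1/q}C^{1/p}$, then $\Delta_{p;A,B,C}(X,Y)\le\Delta_p(X,Y)$.
   Context: $\|X\|_r:=(\mathbb{E}|X|^r)^{1/r}$. Note $\mathbb{E}X^p-(\mathbb{E}X)^p\ge0$ and $\mathbb{E}Y^p-(\mathbb{E}Y)^p\ge0$ by Lyapunov's inequality, so the expression is well defined. *)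

(* Defs.v *)
From HB Require Import structures.
From mathcomp Require Import all_boot all_order all_algebra.
From mathcomp Require Import all_classical all_reals all_analysis.
Set Implicit Arguments. Unset Strict Implicit. Unset Printing Implicit Defensive.
Import Order.TTheory GRing.Theory Num.Theory.
Local Open Scope ring_scope.

(* real-valued expectation: E[f] as a real number (fine of the extended-real
   expectation); used only on integrable quantities in the statement *)
Definition rE d (T : measurableType d) (R : realType) (P : probability T R)
  (f : T -> R) : R := fine ('E_P[f])%E.

Definition Delta d (T : measurableType d) (R : realType) (P : probability T R)
  (p q A B C : R) (X Y : T -> R) : R :=
  A + rE P (fun w => X w `^ (p - 1) * Y w) - (rE P X) `^ (p - 1) * rE P Y
  - (B + rE P (fun w => X w `^ p) - (rE P X) `^ p) `^ (q^-1)
    * (C + rE P (fun w => Y w `^ p) - (rE P Y) `^ p) `^ (p^-1).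

Definition Delta0 d (T : measurableType d) (R : realType) (P : probability T R)
  (p q : R) (X Y : T -> R) : R := Delta P p q 0 0 0 X Y.

(* Main.v *)
Require Import Defs.
From HB Require Import structures.
From mathcomp Require Import all_boot all_order all_algebra.
From mathcomp Require Import all_classical all_reals all_analysis.
From mathcomp Require Import lra.
Import Order.TTheory GRing.Theory Num.Theory.
Local Open Scope ring_scope.

Lemma jens d (T : measurableType d) (R : realType)
  (P : probability T R) (p q : R) (X : {RV P >-> R}) :
  1 < p -> 1 < q -> p^-1 + q^-1 = 1 ->
  (forall w, 0 <= X w) ->
  ('N[P]_(p%:E)[EFin \o X] < +oo)%E ->
  0 <= rE P X /\ (rE P X) `^ p <= rE P (fun w => X w `^ p).
Proof.
move=> p1 q1 pq X0 XN.
have p0 : 0 < p by apply: lt_trans p1.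
have q0 : 0 < q by apply: lt_trans q1.
have H := @hoelder _ _ _ P X (cst 1) p q (measurable_funPT X) (measurable_cst _) p0 q0 pq.
rewrite Lnorm1 Lnorm_cst1 [X in (_ * X)%E](_ : _ = 1%E) ?mule1 in H; last first.
  by rewrite -(poweR1r q^-1); congr (_ `^ _)%E; exact: probability_setT.
have EX : ('E_P[X] <= 'N[P]_(p%:E)[EFin \o X])%E.
  rewrite unlock /=; apply: le_trans H; apply: ge0_le_integral => //=.
  - by move=> x _; rewrite lee_fin.
  - exact/measurable_realfun.measurable_EFinP.
  - apply/measurable_realfun.measurable_EFinP; apply: measurableT_comp => //.
    by apply: measurable_realfun.measurable_funM.
  - by move=> x _; rewrite mulr1 ger0_norm.
set N := ('N[P]_(p%:E)[EFin \o X])%E in XN EX *.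
have N0 : (0 <= N)%E by apply: Lnorm_ge0.
have E0 : (0 <= 'E_P[X])%E by rewrite unlock; apply: integral_ge0 => x _; rewrite lee_fin.
have Nf : N \is a fin_num by rewrite ge0_fin_numE.
have Ef : ('E_P[X])%E \is a fin_num by rewrite ge0_fin_numE // (le_lt_trans EX).
have Np : (N `^ p = 'E_P[fun w => X w `^ p]%R)%E.
  rewrite /N powR_Lnorm ?gt_eqF // unlock; apply: eq_integral => x _ /=.
  by rewrite ger0_norm.
split; first by rewrite /rE fine_ge0.
rewrite /rE -Np fine_poweR; apply: ge0_ler_powR; rewrite ?nnegrE ?fine_ge0 ?(ltW p0) //.
by rewrite fine_le.
Qed.

Lemma powRVK (R : realType) (x r : R) : 0 <= x -> r != 0 -> (x `^ r^-1) `^ r = x.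
Proof. by move=> x0 r0; rewrite -powRrM mulVf // powRr1. Qed.

Theorem lemma1 (d : measure_display) (T : measurableType d) (R : realType)
  (P : probability T R) (p q : R) (X Y : {RV P >-> R}) (A B C : R) :
  1 < p -> 1 < q -> p^-1 + q^-1 = 1 ->
  (forall w, 0 <= X w) -> (forall w, 0 <= Y w) ->
  ('N[P]_(p%:E)[EFin \o X] < +oo)%E ->
  ('N[P]_(p%:E)[EFin \o Y] < +oo)%E ->
  ('N[P]_(q%:E)[EFin \o Y] < +oo)%E ->
  0 <= A -> 0 <= B -> 0 <= C ->
  A <= B `^ (q^-1) * C `^ (p^-1) ->
  Delta P p q A B C X Y <= Delta0 P p q X Y.
Proof.
move=> p1 q1 pq X0 Y0 XN YN _ A0 B0 C0 HA.
have [_ JX] := @jens _ _ _ P p q X p1 q1 pq X0 XN.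
have [_ JY] := @jens _ _ _ P p q Y p1 q1 pq Y0 YN.
rewrite /Delta0 /Delta !add0r.
rewrite -[B + _ - _]addrA -[C + _ - _]addrA.
set a := _ - rE P X `^ p; set b := _ - rE P Y `^ p.
have a0 : 0 <= a by rewrite subr_ge0.
have b0 : 0 <= b by rewrite subr_ge0.
have p0 : 0 < p by apply: lt_trans p1.
have q0 : 0 < q by apply: lt_trans q1.
have H := @hoelder2 R (B `^ q^-1) (a `^ q^-1) (C `^ p^-1) (b `^ p^-1) q p
  (powR_ge0 _ _) (powR_ge0 _ _) (powR_ge0 _ _) (powR_ge0 _ _) q0 p0
  ltac:(by rewrite addrC).
rewrite !powRVK ?gt_eqF // in H.
move: H HA.
set e1 := rE P _; set e2 := rE P X `^ (p - 1) * rE P Y.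
set s := (B + a) `^ q^-1 * (C + b) `^ p^-1.
set t := a `^ q^-1 * b `^ p^-1.
set u := B `^ q^-1 * C `^ p^-1.
clearbody e1 e2 s t u => H HA.
lra.
Qed.
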